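(* Let $m\ge 1$ and $n\ge 1$ be integers and let $G=K_m\circ\overline{K_n}$ (equivalently, the complete $m$-partite graph $K_{n,n,\ldots,n}$ with $m$ parts of size $n$), a graph on $mn$ vertices. If $n\ge 2$, then $G$ is orientable $\mathbb{Z}_{mn}$-distance magic if and only if $n\not\equiv 1\pmod 2$ or $m\not\equiv 2\pmod 4$. If $n=1$ (so $G=K_m$), then $G$ is orientable $\mathbb{Z}_{m}$-distance magic if and only if $m$ is odd.
   Context: For graphs $G,H$, the lexicographic product $G\circ H$ has vertex set $V(G)\times V(H)$, with $(g,h)$ adjacent to $(g',h')$ iff $g$ is adjacent to $g'$ in $G$, or $g=g'$ and $h$ is adjacent to $h'$ in $H$. $\overline{K_n}$ denotes the edgeless graph on $n$ vertices. For an oriented graph $\vec G$ and a vertex $x$, $N^+(x)$ is the set of vertices $y$ with an arc from $x$ to $y$, and $N^-(x)$ is the set of vertices $y$ with an arc from $y$ to $x$. For an Abelian group $\Gamma$ of order $n$, a directed $\Gamma$-distance magic labeling of an oriented graph $\vec G$ of order $n$ is a bijection $\vec l:V\to\Gamma$ such that there is $\mu\in\Gamma$ with $\sum_{y\in N^+(x)}\vec l(y)-\sum_{y\in N^-(x)}\vec l(y)=\mu$ for every vertex $x$. A simple graph $G$ of order $n$ is orientable $\Gamma$-distance magic if some orientation of its edges admits a directed $\Gamma$-distance magic labeling. $\mathbb{Z}_n$ is the cyclic group of integers modulo $n$. *)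

(* Defs.v *)
From HB Require Import structures.
From mathcomp Require Import all_boot all_order all_algebra.
Set Implicit Arguments. Unset Strict Implicit. Unset Printing Implicit Defensive.
Import GRing.Theory.
Local Open Scope ring_scope.

(* The cyclic group Z_k for k >= 1, represented by 'I_k with its canonical
   additive group structure ('I_(k.-1.+1) is convertible to 'I_k for k >= 1,
   and unlike 'Z_k it is the trivial group for k = 1). *)
Definition Zcyc (k : nat) : finZmodType := 'I_(k.-1.+1).

(* Lexicographic product K_m o (edgeless graph on n vertices):
   (g,h) ~ (g',h') iff g ~ g' in K_m (i.e. g != g'), or g = g' and h ~ h'
   in the edgeless graph (never). *)
Definition KmLexEmpty (m n : nat) : rel ('I_m * 'I_n) :=
  fun x y => (x.1 != y.1) || ((x.1 == y.1) && false).

Definition is_orientation (V : finType) (adj : rel V) (o : rel V) : Prop :=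
  forall x y, adj x y = (o x y || o y x) /\ ~~ (o x y && o y x).

Definition directed_distance_magic (V : finType) (Gam : zmodType)
    (o : rel V) (l : V -> Gam) : Prop :=
  bijective l /\
  exists mu : Gam, forall x : V,
    (\sum_(y | o x y) l y) - (\sum_(y | o y x) l y) = mu.

Definition orientable_distance_magic (V : finType) (Gam : zmodType)
    (adj : rel V) : Prop :=
  exists o : rel V, is_orientation adj o /\
    exists l : V -> Gam, directed_distance_magic o l.

(* Main.v *)
Require Import Defs.
From mathcomp Require Import all_boot all_order all_algebra zify.
Set Implicit Arguments. Unset Strict Implicit. Unset Printing Implicit Defensive.
Import GRing.Theory.

Lemma inZpD (p a b : nat) : (inZp (a + b) : 'I_p.+1) = (inZp a + inZp b)%R.
Proof. apply: val_inj => /=. by rewrite modnDm. Qed.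

Lemma inZp0 (p : nat) : (inZp 0 : 'I_p.+1) = 0%R.
Proof. by apply: val_inj => /=; rewrite mod0n. Qed.

Lemma inZp_sum (p : nat) (I : finType) (P : pred I) (F : I -> nat) :
  (inZp (\sum_(i | P i) F i) : 'I_p.+1) = (\sum_(i | P i) inZp (F i))%R.
Proof.
by apply: (big_morph (fun a => inZp a : 'I_p.+1)); [exact: inZpD | exact: inZp0].
Qed.

Lemma inZp_eq (p a b : nat) : ((inZp a : 'I_p.+1) = inZp b) <-> (a = b %[mod p.+1]).
Proof.
split; first by move/(congr1 val).
by move=> h; apply: val_inj => /=.
Qed.

Lemma diff_mod (m n x1 x2 y1 y2 : nat) : x1 < m -> y1 < m -> x2 < n ->
  ((y1 + m * y2) + (m * n - (x1 + m * x2))) %% m = (y1 + (m - x1)) %% m.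
Proof.
move=> h1 h2 h3.
have -> : (y1 + m * y2) + (m * n - (x1 + m * x2)) = (y2 + (n - 1 - x2)) * m + (y1 + (m - x1)).
  nia.
by rewrite modnMDl.
Qed.

Lemma diff_mod0 (m x1 y1 : nat) : x1 < m -> y1 < m ->
  ((y1 + (m - x1)) %% m == 0) = (x1 == y1).
Proof.
move=> h1 h2.
case: (ltngtP x1 y1) => h.
- have -> : y1 + (m - x1) = (y1 - x1) + m by lia.
  by rewrite modnDr modn_small; lia.
- rewrite modn_small; lia.
- subst; rewrite subnKC ?modnn //; lia.
Qed.

Lemma val_Zsub (p : nat) (x y : 'I_p.+1) : val (x - y)%R = (x + (p.+1 - y)) %% p.+1.
Proof. by rewrite /= modnDmr. Qed.

Lemma val_Zopp (p : nat) (x : 'I_p.+1) : val (- x)%R = (p.+1 - x) %% p.+1.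
Proof. by []. Qed.

Lemma cayley_p (m n p : nat) (hp : p.+1 = m * n) (hmn : odd m || ~~ odd n) :
  @orientable_distance_magic _ ('I_p.+1) (@KmLexEmpty m n).
Proof.
have hm : 0 < m by rewrite lt0n; apply/eqP => m0; rewrite m0 mul0n in hp.
have hn : 0 < n by rewrite lt0n; apply/eqP => n0; rewrite n0 muln0 in hp.
pose L (x : 'I_m * 'I_n) : nat := x.1 + m * x.2.
have LltN : forall x, L x < p.+1.
  move=> [x1 x2]; rewrite hp /L /=.
  have := ltn_ord x1; have := ltn_ord x2; nia.
pose l x : 'I_p.+1 := inZp (L x).
have vl : forall x, val (l x) = L x by move=> x; rewrite /= modn_small.
pose inD (z : 'I_p.+1) := (val z %% m != 0) && (2 * val z < p.+1).
have lbij : bijective l.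
  apply: inj_card_bij; last by rewrite card_prod !card_ord hp.
  move=> [x1 x2] [y1 y2] /(congr1 val); rewrite !vl /L /= => E.
  have E1 : x1 = y1 :> nat.
    have := congr1 (modn^~ m) E.
    rewrite ![_ + m * _]addnC ![m * _]mulnC !modnMDl !modn_small //.
  have E2 : x2 = y2 :> nat.
    move: E; rewrite E1 => /addnI /eqP; rewrite eqn_mul2l.
    by case/orP => [/eqP m0|/eqP //]; rewrite m0 in hm.
  by congr pair; apply: val_inj.
exists (fun x y => inD (l y - l x)%R).
split.
  move=> x y. rewrite /KmLexEmpty andbF orbF.
  set d := val (l y - l x)%R.
  have hd : d = (L y + (p.+1 - L x)) %% p.+1 by rewrite /d val_Zsub !vl.
  have mN : m %| p.+1 by rewrite hp dvdn_mulr.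
  have dmod : (d %% m == 0) = (x.1 == y.1).
    rewrite hd (modn_dvdm _ mN) hp /L diff_mod //.
    by rewrite diff_mod0.
  have neg : val (l x - l y)%R = (p.+1 - d) %% p.+1 by rewrite -opprB val_Zopp.
  have dlt : d < p.+1 by exact: ltn_ord.
  rewrite /inD neg -/d.
  case E: (x.1 == y.1); move: dmod; rewrite E => dmod.
    have md : m %| d by [].
    have md' : ((p.+1 - d) %% p.+1) %% m == 0.
      by rewrite (modn_dvdm _ mN); apply: dvdn_sub.
    by rewrite md' dmod.
  move/negbT: dmod => dmod.
  have d0 : 0 < d by move: dmod; case: (d) => //; rewrite mod0n.
  have dsm : (p.+1 - d) %% p.+1 = p.+1 - d by rewrite modn_small //; lia.
  have md' : (p.+1 - d) %% m != 0.
    apply: contra dmod => H.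
    have H' : m %| p.+1 - d by [].
    by move: H'; rewrite (dvdn_subr (ltnW dlt) mN).
  have d2 : 2 * d != p.+1.
    apply/eqP => D.
    case on: (odd n).
      move: hmn; rewrite on orbF => om.
      by move: (congr1 odd D); rewrite hp !oddM om on.
    have hn2 : n = 2 * n./2 by rewrite -{1}(odd_double_half n) on add0n -mul2n.
    move: D; rewrite hp hn2 mulnCA => /eqP; rewrite eqn_mul2l /= => /eqP Dd.
    by move: dmod; rewrite Dd modnMr.
  rewrite dsm md' dmod /=.
  split; [ | apply/negP]; lia.
exists l; split => //.
exists (\sum_(z | inD z) (z + z))%R => x.
have e1 : (\sum_(y | inD (l y - l x)) l y = \sum_(z | inD (z - l x)) z)%R.
  by rewrite (reindex l) //; exact: onW_bij.
have e2 : (\sum_(y | inD (l x - l y)) l y = \sum_(z | inD (l x - z)) z)%R.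
  by rewrite (reindex l) //; exact: onW_bij.
have e3 : (\sum_(z | inD (z - l x)) z = \sum_(z | inD z) (z + l x))%R.
  rewrite [LHS](reindex_inj (@addIr _ (l x))) /=.
  by apply: eq_bigl => z; rewrite addrK.
have e4 : (\sum_(z | inD (l x - z)) z = \sum_(z | inD z) (l x - z))%R.
  rewrite [LHS](reindex_inj (@subrI _ (l x))) /=.
  by apply: eq_bigl => z; rewrite subKr.
rewrite e1 e2 e3 e4.
rewrite -sumrB; apply: eq_bigr => z _.
by rewrite opprB -addrA (addrC (l x)) subrK.
Qed.
Lemma xor_const (m : nat) (b : bool) : \big[addb/false]_(i < m) b = odd m && b.
Proof.
rewrite big_const_ord; elim: m => [|m IH] //=.
by rewrite IH; case: (odd m); case: (b).
Qed.

Lemma xor_odd (N : nat) : \big[addb/false]_(i < N) odd i = odd N./2.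
Proof.
rewrite -(big_mkord xpredT odd).
elim: N => [|N IH]; first by rewrite big_geq.
rewrite big_nat_recr //= IH.
by rewrite uphalf_half oddD; case: (odd N); case: (odd N./2).
Qed.

Lemma nec_p (m n p : nat) (hp : p.+1 = m * n) (em : ~~ odd m) (on : odd n)
  (hcase : n = 1 \/ m %% 4 = 2) :
  @orientable_distance_magic _ ('I_p.+1) (@KmLexEmpty m n) -> False.
Proof.
have hm : 0 < m by rewrite lt0n; apply/eqP => m0; rewrite m0 mul0n in hp.
have hn : 0 < n by rewrite lt0n; apply/eqP => n0; rewrite n0 muln0 in hp.
move=> [o [hor [l [lbij [mu hmu]]]]].
have eN : odd p.+1 = false by rewrite hp oddM (negbTE em).
pose par (z : 'I_p.+1) := odd (val z).
have parD : forall x y, par (x + y)%R = par x (+) par y.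
  by move=> x y; rewrite /par /= odd_mod // oddD.
have parN : forall x, par (- x)%R = par x.
  move=> x; rewrite /par /= odd_mod // oddB ?eN //; exact: ltnW.
have par0 : par 0%R = false by [].
have parS : forall (P : pred ('I_m * 'I_n)) (F : 'I_m * 'I_n -> 'I_p.+1),
    par (\sum_(i | P i) F i)%R = \big[addb/false]_(i | P i) par (F i).
  by move=> P F; apply: (big_morph par parD par0).
pose f y := par (l y).
pose Pp (i : 'I_m) := \big[addb/false]_(y | y.1 == i) f y.
pose T := \big[addb/false]_y f y.
have K : forall x : 'I_m * 'I_n, par mu = T (+) Pp x.1.
  move=> x; rewrite -(hmu x) parD parN !parS /T /Pp.
  rewrite (big_mkcond (fun y => o x y)) (big_mkcond (fun y => o y x)).
  rewrite (big_mkcond (fun y => y.1 == x.1)) -!big_split /=.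
  apply: eq_bigr => y _.
  have [h1 h2] := hor x y.
  move: h1 h2; rewrite /KmLexEmpty andbF orbF eq_sym.
  by rewrite /f; case: (o x y); case: (o y x); case: (y.1 == x.1); case: (par (l y)).
have h0 : 'I_n by exact: Ordinal hn.
have Peq : forall i j, Pp i = Pp j.
  move=> i j; apply: (@addbI T).
  by rewrite -(K (i, h0)) -(K (j, h0)).
have i0 : 'I_m by exact: Ordinal hm.
have T0 : T = false.
  rewrite /T (partition_big (fun y => y.1) xpredT) //=.
  rewrite (eq_bigr (fun _ => Pp i0)); last by move=> i _; rewrite -(Peq i).
  by rewrite xor_const (negbTE em).
case: hcase => [n1 | m42].
  subst n.
  have [g lg gl] := lbij.
  have Pf : forall i, Pp i = f (i, ord0).
    move=> i; rewrite /Pp (big_pred1 (i, ord0)) // => y.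
    by case: y => y1 y2; rewrite /= [y2]ord1 /= xpair_eqE eqxx andbT.
  have m2 : 1 < m by move: em hm; clear; case: m => [|[|]] //.
  have := Peq (g 0%R).1 (g (inZp 1)).1.
  rewrite !Pf.
  have -> : ((g 0%R).1, ord0) = g 0%R by case: (g 0%R) => a b /=; rewrite [b]ord1.
  have -> : ((g (inZp 1)).1, ord0) = g (inZp 1) by case: (g (inZp 1)) => a b /=; rewrite [b]ord1.
  rewrite /f !gl /par /= modn_small //; lia.
have : T = odd (p.+1)./2.
  rewrite -xor_odd /T.
  rewrite [RHS](reindex l) //; exact: onW_bij.
rewrite T0 hp.
have -> : m = (m %/ 4).*2.+1.*2.
  by rewrite {1}(divn_eq m 4) m42; lia.
by rewrite -doubleMl doubleK oddM /= odd_double on.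
Qed.
Definition pi0 k j := if 2*j < k then k - 1 - 2*j else if j < 2*k then 5*k - 1 - 2*j
  else if 2*j < 5*k - 1 then 5*k - 2 - 2*j else if j < 4*k - 1 then 9*k - 2 - 2*j else k.
Definition pi1 k j := if j < k then j + 3*k else j - k.
Definition pp k j := if j < 2*k then j else if j < 4*k - 1 then j + 1 else 2*k.
Definition piv k h j := if h == 0 then pi0 k j else if h == 1 then pi1 k j
  else if h == 2 then pp k j else if odd h then j else 4*k - 1 - j.
Definition rr n h := if h == 0 then 0 else if odd h then h.+1 %/ 2 else n - h %/ 2.
Definition LL k n j h := n * piv k h j + rr n h.

Lemma piv_lt k h j : 0 < k -> j < 4*k -> piv k h j < 4*k.
Proof.
move=> hk hj; rewrite /piv /pi0 /pi1 /pp.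
(repeat case: ifP => ?); lia.
Qed.

Lemma piv_inj k h j j' : 0 < k -> j < 4*k -> j' < 4*k -> piv k h j = piv k h j' -> j = j'.
Proof.
move=> hk hj hj'; rewrite /piv.
case: ifP => ?.
  rewrite /pi0; (repeat case: ifP => ?); lia.
case: ifP => ?.
  rewrite /pi1; (repeat case: ifP => ?); lia.
case: ifP => ?.
  rewrite /pp; (repeat case: ifP => ?); lia.
case: ifP => ?; lia.
Qed.

Lemma rr_lt n h : odd n -> h < n -> rr n h < n.
Proof. move=> on hn; rewrite /rr; (repeat case: ifP => ?); lia. Qed.

Lemma rr_inj n h h' : odd n -> h < n -> h' < n -> rr n h = rr n h' -> h = h'.
Proof. move=> on hn hn'; rewrite /rr; (repeat case: ifP => ?); lia. Qed.

Lemma LL_lt k n j h : 0 < k -> odd n -> j < 4*k -> h < n -> LL k n j h < 4*k*n.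
Proof.
move=> hk on hj hh; rewrite /LL.
have := piv_lt h hk hj; have := rr_lt on hh; nia.
Qed.

Lemma LL_inj k n j h j' h' : 0 < k -> odd n -> j < 4*k -> h < n -> j' < 4*k -> h' < n ->
  LL k n j h = LL k n j' h' -> j = j' /\ h = h'.
Proof.
move=> hk on hj hh hj' hh' E.
have n0 : 0 < n by lia.
have Em := congr1 (modn^~ n) E; have Ed := congr1 (divn^~ n) E.
rewrite /LL /= ![n * _]mulnC !modnMDl !modn_small ?rr_lt // in Em.
rewrite /LL /= ![n * _]mulnC !divnMDl // !divn_small ?rr_lt // !addn0 in Ed.
have hh2 : h = h' by apply: (rr_inj on).
rewrite -hh2 in Ed; split => //; exact: (piv_inj hk hj hj' Ed).
Qed.

Lemma core_sum k j : 0 < k -> j < 4*k -> j != 4*k - 1 ->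
  pi0 k j + pi1 k j + pp k j + 1 = 4*k \/ pi0 k j + pi1 k j + pp k j + 1 = 8*k.
Proof. move=> hk hj hj'; rewrite /pi0 /pi1 /pp; (repeat case: ifP => ?); lia. Qed.

Lemma core_spec k : 0 < k -> pi0 k (4*k-1) = k /\ pi1 k (4*k-1) = 3*k - 1 /\ pp k (4*k-1) = 2*k.
Proof. move=> hk; rewrite /pi0 /pi1 /pp; (repeat case: ifP => ?); lia. Qed.

Lemma pair_sum (F : nat -> nat) s :
  \sum_(0 <= h < s.*2.+1) F h = F 0 + \sum_(0 <= t < s) (F t.*2.+1 + F t.*2.+2).
Proof.
elim: s => [|s IH]; first by rewrite big_nat1 big_geq ?addn0.
rewrite doubleS [in LHS]big_nat_recr // [in LHS]big_nat_recr //= IH [in RHS]big_nat_recr //=; lia.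
Qed.

Lemma LL_sum k s j : 0 < k -> 0 < s -> j < 4*k ->
  \sum_(0 <= h < s.*2.+1) LL k s.*2.+1 j h =
  s.*2.+1 * (pi0 k j + pi1 k j + pp k j + 1) + (s - 1) * (4*k*s.*2.+1).
Proof.
move=> hk hs hj.
rewrite pair_sum (big_ltn hs).
rewrite (eq_big_nat _ _ (F2 := fun _ => 4*k*s.*2.+1)); last first.
  move=> t /andP [t1 t2]; rewrite /LL /piv /rr /=.
  have [e he] : exists e, 4 * k - 1 - j = e by exists (4 * k - 1 - j).
  have hje : j + e + 1 = 4 * k by lia.
  rewrite he.
  (repeat case: ifP => ?); try lia.
  rewrite /= (_ : t.*2.+2 %/ 2 = t.+1); last by lia.
  have := congr1 (muln s.*2.+1) hje; rewrite !mulnDr; nia.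
rewrite sum_nat_const_nat.
rewrite /LL /piv /rr /=.
rewrite (_ : 0.*2.+2 %/ 2 = 1) //; nia.
Qed.

Definition sgz (V : zmodType) (b : bool) (z : V) : V := if b then z else (- z)%R.

Lemma sgz_sum (V : zmodType) (I : finType) (b : bool) (F : I -> V) :
  sgz b (\sum_i F i)%R = (\sum_i sgz b (F i))%R.
Proof. by case: b => //=; rewrite sumrN. Qed.

Lemma signed_p (k s p : nat) (hk : 0 < k) (hs : 0 < s) (hp : p.+1 = 4 * k * s.*2.+1) :
  @orientable_distance_magic _ ('I_p.+1) (@KmLexEmpty (4 * k) s.*2.+1).
Proof.
set m := 4 * k; set n := s.*2.+1.
have on : odd n by rewrite /n /= odd_double.
pose l (x : 'I_m * 'I_n) : 'I_p.+1 := inZp (LL k n x.1 x.2).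
have vl : forall x, val (l x) = LL k n x.1 x.2.
  by move=> x; rewrite /= modn_small // hp; apply: LL_lt => //; rewrite ?ltn_ord.
pose g (x : 'I_m * 'I_n) : bool := ~~ ((x.2 == 0 :> nat) && (x.1 == m - 1 :> nat)).
pose o (x y : 'I_m * 'I_n) := (x.1 != y.1) && ((x.1 < y.1) == (g x == g y)).
pose G (j : 'I_m) := (\sum_(h : 'I_n) sgz (g (j, h)) (l (j, h)))%R.
have G0 : forall j, G j = 0%R.
  move=> j; rewrite /G.
  have hj : (j : nat) < 4 * k := ltn_ord j.
  have Hs := LL_sum hk hs hj.
  have [c0 [c1 c2]] := core_spec hk.
  case sp: (j == m - 1 :> nat).
    move/eqP: sp => sp.
    rewrite big_ord_recl /=.
    rewrite (eq_bigr (fun i : 'I_(s.*2) => l (j, lift ord0 i))); last first.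
      by move=> i _; rewrite /g /=.
    rewrite /g /= sp eqxx /=.
    rewrite /l -inZp_sum /=.
    have -> : (inZp (\sum_(i < s.*2) LL k n j (lift ord0 i)) : 'I_p.+1) = inZp (LL k n j 0).
      apply/inZp_eq.
      rewrite (eq_bigr (fun i : 'I_(s.*2) => LL k n j i.+1)) //.
      rewrite -(big_mkord xpredT (fun i => LL k n j i.+1)).
      move: Hs; rewrite big_nat_recl // => Hs.
      have L0 : LL k n j 0 = n * k by rewrite /LL /piv /rr /= sp c0 addn0.
      have -> : \sum_(0 <= i < s.*2) LL k n j i.+1 = n * k + s * (4 * k * n).
        apply/(@addnI (n * k)); rewrite -L0 Hs L0.
        rewrite sp c0 c1 c2 /n; nia.
      by rewrite L0 hp addnC modnMDl.
    by rewrite addNr.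
  rewrite (eq_bigr (fun h => l (j, h))); last first.
    by move=> h _; rewrite /g /= sp andbF.
  rewrite /l -inZp_sum /=.
  rewrite (eq_bigr (fun i : 'I_n => LL k n j i)) //.
  rewrite -(big_mkord xpredT (fun i => LL k n j i)) Hs.
  apply: val_inj => /=; rewrite hp.
  have ne : (j : nat) != 4 * k - 1 by rewrite -/m sp.
  case: (core_sum hk hj ne) => ->.
    by rewrite (_ : n * (4 * k) = 1 * (4 * k * n)) ?modnMDl ?modnMl; [|rewrite /n; nia].
  by rewrite (_ : n * (8 * k) = 2 * (4 * k * n)) ?modnMDl ?modnMl; [|rewrite /n; nia].
exists o; split.
  move=> x y; rewrite /KmLexEmpty andbF orbF /o eq_sym.
  case: (ltngtP x.1 y.1) => h; rewrite ?h /=; last by rewrite (val_inj h) eqxx.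
    have ne : y.1 != x.1 by apply/eqP => e; rewrite e ltnn in h.
    by rewrite ne /=; case: (g x); case: (g y).
  have ne : y.1 != x.1 by apply/eqP => e; rewrite e ltnn in h.
  by rewrite ne /=; case: (g x); case: (g y).
exists l; split.
  apply: inj_card_bij; last by rewrite card_prod !card_ord hp.
  move=> [x1 x2] [y1 y2] /(congr1 val); rewrite !vl /= => E.
  have [] := LL_inj hk on (ltn_ord x1) (ltn_ord x2) (ltn_ord y1) (ltn_ord y2) E.
  by move=> e1 e2; congr pair; apply: val_inj.
exists 0%R => x.
rewrite (big_mkcond (fun y => o x y)) (big_mkcond (fun y => o y x)) -sumrB /=.
rewrite (eq_bigr (fun y => if y.1 == x.1 then 0%R else
    sgz (x.1 < y.1) (sgz (g x) (sgz (g y) (l y))))); last first.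
  move=> y _; rewrite /o eq_sym.
  case: (ltngtP x.1 y.1) => h; rewrite ?h /=.
  - have ne : y.1 != x.1 by apply/eqP => e; rewrite e ltnn in h.
    rewrite (negbTE ne) /=.
    by case: (g x); case: (g y); rewrite /= ?subr0 ?sub0r ?opprK.
  - have ne : y.1 != x.1 by apply/eqP => e; rewrite e ltnn in h.
    rewrite (negbTE ne) /=.
    by case: (g x); case: (g y); rewrite /= ?subr0 ?sub0r ?opprK.
  - by rewrite (val_inj h) eqxx /= subr0.
rewrite -(pair_bigA _ (fun j h => if (j, h).1 == x.1 then 0%R else
    sgz (x.1 < (j, h).1) (sgz (g x) (sgz (g (j, h)) (l (j, h)))))) /=.
apply: big1 => j _.
case: eqP => _; first by rewrite big1.
by rewrite -!sgz_sum -/(G j) G0; case: (x.1 < j); case: (g x); rewrite /= ?oppr0.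
Qed.

Lemma cayley (m n : nat) (hm : 0 < m) (hn : 0 < n) (h : odd m || ~~ odd n) :
  @orientable_distance_magic _ (Zcyc (m * n)) (@KmLexEmpty m n).
Proof.
have hp : (m * n).-1.+1 = m * n by rewrite prednK // muln_gt0 hm.
exact: (cayley_p hp h).
Qed.

Lemma nec (m n : nat) (hm : 0 < m) (hn : 0 < n) (em : ~~ odd m) (on : odd n)
  (hcase : n = 1 \/ m %% 4 = 2) :
  @orientable_distance_magic _ (Zcyc (m * n)) (@KmLexEmpty m n) -> False.
Proof.
have hp : (m * n).-1.+1 = m * n by rewrite prednK // muln_gt0 hm.
exact: (nec_p hp em on hcase).
Qed.

Lemma signed (m n : nat) (hm : 0 < m) (m4 : m %% 4 = 0) (on : odd n) (n3 : 2 <= n) :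
  @orientable_distance_magic _ (Zcyc (m * n)) (@KmLexEmpty m n).
Proof.
have Em : m = 4 * (m %/ 4) by rewrite {1}(divn_eq m 4) m4 addn0 mulnC.
have En : n = (n./2).*2.+1 by rewrite -{1}(odd_double_half n) on.
have hk : 0 < m %/ 4 by lia.
have hs : 0 < n./2 by lia.
move: (m %/ 4) (n./2) Em En hk hs => k s Em En hk hs.
subst m n.
have hp : (4 * k * s.*2.+1).-1.+1 = 4 * k * s.*2.+1 by rewrite prednK // muln_gt0 hm.
exact: (signed_p hk hs hp).
Qed.

Theorem theorem5 (m n : nat) (hm : (1 <= m)%N) (hn : (1 <= n)%N) :
  ((2 <= n)%N ->
    (@orientable_distance_magic _ (Zcyc (m * n)) (@KmLexEmpty m n) <->
     (~~ odd n \/ m %% 4 != 2)%N)) /\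
  (n = 1%N ->
    (@orientable_distance_magic _ (Zcyc (m * n)) (@KmLexEmpty m n) <-> odd m)).
Proof.
split.
  move=> n2; split.
    move=> H.
    case on: (odd n); last by left.
    right; apply/negP => /eqP m42.
    have em : ~~ odd m.
      by rewrite (divn_eq m 4) m42 oddD oddM andbF.
    exact: (nec hm hn em on (or_intror m42) H).
  move=> hyp.
  case om: (odd m); first by apply: cayley => //; rewrite om.
  case on: (odd n); last by apply: cayley => //; rewrite on orbT.
  case: hyp => [|m4]; first by rewrite on.
  apply: signed => //.
  have : m %% 4 < 4 by rewrite ltn_mod.
  have : odd m = odd (m %% 4) by rewrite [in LHS](divn_eq m 4) oddD oddM andbF.
  move: m4; rewrite om; case: (m %% 4) => [|[|[|[|]]]] //.
move=> n1; split.
  move=> H.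
  case om: (odd m) => //.
  exfalso; apply: (nec hm hn _ _ (or_introl n1) H); first by rewrite om.
  by rewrite n1.
move=> om; apply: cayley => //; by rewrite om.
Qed.
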